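(* Let $(\mathcal{A},m)$ be a multiarrangement and fix a hyperplane $H_0\in \mathcal{A}$ with $H_0=\ker \alpha_{H_0}$. If $\delta\in D_0^p(\mathcal{A},m)$, then $\delta|_{H_0} \in D^p(\mathcal{A}^{H_0},m^{H_0})$. In particular, this gives well-defined restriction maps $\mathrm{res}_{H_0}^p : D_0^p (\mathcal{A},m) \rightarrow D^p (\mathcal{A}^{H_0},m^{H_0})$, $\delta\mapsto\delta|_{H_0}$.
   Context: Let $V=\mathbb{K}^\ell$, $S=\mathbb{K}[x_1,\ldots,x_\ell]$, and let $(\mathcal{A},m)$ be a multiarrangement (a finite set of linear hyperplanes $\mathcal{A}$ in $V$ with multiplicity $m:\mathcal{A}\to\mathbb{Z}_{>0}$), each $H\in\mathcal{A}$ having defining linear form $\alpha_H$. For $p\ge1$, $\mathrm{Der}^p(S)$ is the $S$-module of alternating $p$-linear forms $S^p\to S$ that are $\mathbb{K}$-derivations in each variable, and $D^p(\mathcal{A},m)=\{\theta\in \mathrm{Der}^p(S)\mid \theta(\alpha_H,f_2,\ldots,f_p)\in\alpha_H^{m(H)}S \text{ for all } H\in\mathcal{A},\ f_i\in S\}$. For fixed $H_0\in\mathcal{A}$, $D_0^p(\mathcal{A},m):=\{\delta\in D^p(\mathcal{A},m)\mid \delta(\alpha_{H_0},f_2,\ldots,f_p)=0 \text{ for all } f_i\in S\}$. The multi-Ziegler restriction $(\mathcal{A}^{H_0},m^{H_0})$ is the multiarrangement in $H_0$ given by $\mathcal{A}^{H_0}=\{H_0\cap H\mid H\in\mathcal{A}\setminus\{H_0\}\}$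 and $m^{H_0}(X)=\sum_{H\in\mathcal{A}_X\setminus\{H_0\}} m(H)$, where $\mathcal{A}_X=\{H\in\mathcal{A}\mid X\subseteq H\}$; its derivation modules $D^p(\mathcal{A}^{H_0},m^{H_0})$ are defined analogously over $\overline{S}=S/\alpha_{H_0}S$. Here $\delta|_{H_0}$ denotes the derivation over $\overline{S}$ obtained by reducing the values of $\delta$ modulo $\alpha_{H_0}$. *)

(* Defs.v *)
From HB Require Import structures.
From mathcomp Require Import all_boot all_algebra.
From mathcomp Require Import mpoly.

Set Implicit Arguments.
Unset Strict Implicit.
Unset Printing Implicit Defensive.

Import GRing.Theory.
Local Open Scope ring_scope.

Definition upd (R : Type) (p : nat) (f : 'I_p -> R) (i : 'I_p) (x : R) : 'I_p -> R :=
  fun j => if j == i then x else f j.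

(* p-derivations over a commutative K-algebra R (structure map iota : K -> R),
   where R is presented as a setoid: eqv is the equality of R.  For R = S we
   take eqv = eq; for the quotient S/(alpha)S we take eqv = congruence modulo
   alpha, so that a map on the quotient is a map on S compatible with eqv. *)
Definition is_pder_up_to (K : Type) (R : comNzRingType) (iota : K -> R)
    (eqv : R -> R -> Prop) (p : nat) (th : ('I_p -> R) -> R) : Prop :=
  [/\ (forall f g, (forall i, eqv (f i) (g i)) -> eqv (th f) (th g)),
      (forall f i x y, eqv (th (upd f i (x + y))) (th (upd f i x) + th (upd f i y))),
      (forall f i c x, eqv (th (upd f i (iota c * x))) (iota c * th (upd f i x))),
      (forall f i x y,
          eqv (th (upd f i (x * y))) (x * th (upd f i y) + y * th (upd f i x))) &
      (forall f (i j : 'I_p), i != j -> eqv (f i) (f j) -> eqv (th f) 0)].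

Definition dvd_up_to (R : comNzRingType) (eqv : R -> R -> Prop) (a b : R) : Prop :=
  exists g : R, eqv b (a * g).

(* D^p of a multiarrangement over R: hyperplanes indexed by the H in J with
   P H, defining forms alpha H, multiplicities mult H.  The condition
   th(alpha_H, f_2, ..., f_p) in alpha_H^{m(H)} R is imposed on the first
   argument (the argument of index 0). *)
Definition Dp_up_to (K : Type) (R : comNzRingType) (iota : K -> R)
    (eqv : R -> R -> Prop) (J : finType) (P : pred J) (alpha : J -> R)
    (mult : J -> nat) (p : nat) (th : ('I_p -> R) -> R) : Prop :=
  is_pder_up_to iota eqv th /\
  forall H, P H -> forall (i : 'I_p) (f : 'I_p -> R),
    val i = 0%N -> eqv (f i) (alpha H) -> dvd_up_to eqv (alpha H ^+ mult H) (th f).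

(* The linear form x |-> sum_i a_i x_i in S = K[x_1,...,x_l] given by the
   coefficient column a; its kernel (the hyperplane) is the row space of
   kermx a = { u : 'rV_l | u *m a = 0 }. *)
Definition lform (K : fieldType) (l : nat) (a : 'cV[K]_l) : {mpoly K[l]} :=
  \sum_(i < l) a i 0 *: 'X_i.

(* Congruence modulo alpha0 in S: equality in S/alpha0 S. *)
Definition modrel (K : fieldType) (l : nat) (a0 f g : {mpoly K[l]}) : Prop :=
  exists h : {mpoly K[l]}, f - g = a0 * h.

Definition cst (K : fieldType) (l : nat) (c : K) : {mpoly K[l]} := c%:MP.

(* Multiarrangement (A,m) in K^l: hyperplanes indexed by a finite type I,
   H = ker alpha_H with alpha_H = lform (a H) nonzero, pairwise distinct,
   with positive multiplicities. *)
Definition is_multiarr (K : fieldType) (l : nat) (I : finType)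
    (a : I -> 'cV[K]_l) (m : I -> nat) : Prop :=
  [/\ forall H, a H != 0,
      forall H H', H != H' -> ~~ (kermx (a H) == kermx (a H'))%MS &
      forall H, (0 < m H)%N].

Definition Dp (K : fieldType) (l : nat) (I : finType) (a : I -> 'cV[K]_l)
    (m : I -> nat) (p : nat) (th : ('I_p -> {mpoly K[l]}) -> {mpoly K[l]}) : Prop :=
  Dp_up_to (@cst K l) eq predT (fun H => lform (a H)) m th.

Definition Dp0 (K : fieldType) (l : nat) (I : finType) (a : I -> 'cV[K]_l)
    (m : I -> nat) (H0 : I) (p : nat)
    (th : ('I_p -> {mpoly K[l]}) -> {mpoly K[l]}) : Prop :=
  Dp a m th /\
  forall (i : 'I_p) (f : 'I_p -> {mpoly K[l]}),
    val i = 0%N -> f i = lform (a H0) -> th f = 0.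

(* Ziegler multiplicity m^{H0}(X) of X = H0 cap H:
   sum of m(H') over H' <> H0 with X contained in H'. *)
Definition zmult (K : fieldType) (l : nat) (I : finType) (a : I -> 'cV[K]_l)
    (m : I -> nat) (H0 H : I) : nat :=
  (\sum_(H' | (H' != H0) &&
       ((kermx (a H0) :&: kermx (a H)) <= kermx (a H'))%MS) m H')%N.

(* delta|_{H0} in D^p(A^{H0}, m^{H0}) over Sbar = S/alpha_{H0} S:
   the elements X of A^{H0} are the H0 cap H (H <> H0), with defining form
   the image of alpha_H in Sbar, and multiplicity m^{H0}(H0 cap H). *)
Definition restr_in_Dp (K : fieldType) (l : nat) (I : finType)
    (a : I -> 'cV[K]_l) (m : I -> nat) (H0 : I) (p : nat)
    (th : ('I_p -> {mpoly K[l]}) -> {mpoly K[l]}) : Prop :=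
  Dp_up_to (@cst K l) (modrel (lform (a H0))) [pred H | H != H0]
    (fun H => lform (a H)) (zmult a m H0) th.

(* Main.v *)
Require Import Defs.
From HB Require Import structures.
From mathcomp Require Import all_boot all_algebra.
From mathcomp Require Import mpoly.
From mathcomp Require Import zify.
Set Implicit Arguments.
Unset Strict Implicit.
Unset Printing Implicit Defensive.
Import GRing.Theory.
Local Open Scope ring_scope.

Definition cong (R : comNzRingType) (a x y : R) : Prop := exists h, x - y = a * h.

Section Cong.
Variables (R : comNzRingType) (a : R).
Lemma cong_refl x : cong a x x. Proof. by exists 0; rewrite subrr mulr0. Qed.
Lemma cong_eq x y : x = y -> cong a x y. Proof. by move=> ->; apply: cong_refl. Qed.
Lemma cong_sym x y : cong a x y -> cong a y x.
Proof. by case=> h e; exists (- h); rewrite mulrN -e opprB. Qed.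
Lemma cong_trans x y z : cong a x y -> cong a y z -> cong a x z.
Proof.
by case=> h e [k f]; exists (h + k); rewrite mulrDr -e -f addrA subrK.
Qed.
Lemma cong_add x y x' y' : cong a x y -> cong a x' y' -> cong a (x + x') (y + y').
Proof.
case=> h e [k f]; exists (h + k); rewrite mulrDr -e -f.
by rewrite opprD addrACA.
Qed.
Lemma cong_mul x y x' y' : cong a x y -> cong a x' y' -> cong a (x * x') (y * y').
Proof.
case=> h e [k f]; exists (x * k + h * y').
have -> : x * x' - y * y' = x * (x' - y') + (x - y) * y'.
  by rewrite mulrBr mulrBl addrA subrK.
by rewrite e f mulrDr !mulrA [x * a]mulrC.
Qed.
Lemma cong_exp x y n : cong a x y -> cong a (x ^+ n) (y ^+ n).
Proof.
move=> c; elim: n => [|n IH]; first exact: cong_refl.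
by rewrite !exprS; apply: cong_mul.
Qed.
Lemma cong_a h : cong a (a * h) 0. Proof. by exists h; rewrite subr0. Qed.
End Cong.

Lemma upd_id (R : Type) p (f : 'I_p -> R) i j : upd f i (f i) j = f j.
Proof. by rewrite /upd; case: eqP => // ->. Qed.
Lemma upd_eq (R : Type) p (f : 'I_p -> R) i x : upd f i x i = x.
Proof. by rewrite /upd eqxx. Qed.
Lemma upd_neq (R : Type) p (f : 'I_p -> R) i x j : j != i -> upd f i x j = f j.
Proof. by rewrite /upd => /negbTE ->. Qed.
Lemma upd_com (R : Type) p (f : 'I_p -> R) i j x y k : i != j ->
  upd (upd f i x) j y k = upd (upd f j y) i x k.
Proof.
move=> ij; rewrite /upd; case: (eqVneq k j) => [->|kj].
  by rewrite eq_sym (negbTE ij).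
by [].
Qed.
Lemma upd_upd (R : Type) p (f : 'I_p -> R) i x y k :
  upd (upd f i x) i y k = upd f i y k.
Proof. by rewrite /upd; case: eqP. Qed.

Section Pder.
Variables (K : Type) (R : comNzRingType) (iota : K -> R) (p : nat)
  (th : ('I_p -> R) -> R).
Hypothesis hth : is_pder_up_to iota eq th.

Lemma th_ext f g : (forall i, f i = g i) -> th f = th g.
Proof. by move: hth; rewrite /is_pder_up_to => -[H _ _ _ _]; apply: H. Qed.
Lemma thD f i x y : th (upd f i (x + y)) = th (upd f i x) + th (upd f i y).
Proof. by case: hth. Qed.
Lemma thZ f i c x : th (upd f i (iota c * x)) = iota c * th (upd f i x).
Proof. by move: hth; rewrite /is_pder_up_to => -[_ _ H _ _]; apply: H. Qed.
Lemma thM f i x y : th (upd f i (x * y)) = x * th (upd f i y) + y * th (upd f i x).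
Proof. by move: hth; rewrite /is_pder_up_to => -[_ _ _ H _]; apply: H. Qed.
Lemma th_alt f (i j : 'I_p) : i != j -> f i = f j -> th f = 0.
Proof. by move: hth; rewrite /is_pder_up_to => -[_ _ _ _ H]; apply: H. Qed.
Lemma th0 f i : th (upd f i 0) = 0.
Proof.
have := thD f i 0 0; rewrite addr0 -{1}[th (upd f i 0)]addr0.
by move/addrI.
Qed.
Lemma thN f i x : th (upd f i (- x)) = - th (upd f i x).
Proof.
have H := thD f i x (- x); rewrite subrr th0 in H.
by apply/eqP; rewrite -addr_eq0 addrC -H.
Qed.
Lemma thB f i x y : th (upd f i (x - y)) = th (upd f i x) - th (upd f i y).
Proof. by rewrite thD thN. Qed.

Lemma th_anti f i j x y : i != j ->
  th (upd (upd f i x) j y) = - th (upd (upd f i y) j x).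
Proof.
move=> ij.
pose g x y := th (upd (upd f i x) j y).
have g2 : forall x y z, g x (y + z) = g x y + g x z by move=> *; rewrite /g thD.
have g1 : forall x y z, g (x + y) z = g x z + g y z.
  move=> x0 y0 z; rewrite /g.
  rewrite (th_ext (g := upd (upd f j z) i (x0 + y0))); last by move=> k; rewrite upd_com.
  rewrite thD; congr (_ + _); apply: th_ext => k; rewrite upd_com // eq_sym //.
have gd : forall x, g x x = 0.
  move=> x0; rewrite /g; apply: (th_alt ij).
  by rewrite upd_eq upd_neq ?upd_eq // eq_sym.
have H := gd (x + y); rewrite g1 !g2 !gd add0r addr0 /g /= in H.
by apply/eqP; rewrite -addr_eq0 -H.
Qed.

Variable a0 : R.
Hypothesis h0 : forall (i : 'I_p) (f : 'I_p -> R), val i = 0%N -> f i = a0 -> th f = 0.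
Hypothesis hp : (0 < p)%N.

Lemma th_a0 f k : f k = a0 -> th f = 0.
Proof.
move=> fk; pose i0 : 'I_p := Ordinal hp.
case: (eqVneq k i0) => [e|ki]; first by apply: (h0 (i := k)) => //; rewrite e.
rewrite (th_ext (g := upd (upd f i0 (f i0)) k a0)); last first.
  by move=> j; rewrite /upd; case: eqP => [->|] //; case: eqP => // ->.
rewrite th_anti 1?eq_sym //; rewrite (h0 (i := i0)) ?oppr0 //.
by rewrite upd_neq ?upd_eq // eq_sym.
Qed.

Lemma th_mula0 f k h : th (upd f k (a0 * h)) = a0 * th (upd f k h).
Proof. by rewrite thM (@th_a0 (upd f k a0) k) ?upd_eq // mulr0 addr0. Qed.

Lemma th_cong1 f k x y : cong a0 x y -> cong a0 (th (upd f k x)) (th (upd f k y)).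
Proof.
case=> h e; exists (th (upd f k h)); by rewrite -thB e th_mula0.
Qed.

Lemma th_cong f g : (forall i, cong a0 (f i) (g i)) -> cong a0 (th f) (th g).
Proof.
move=> fg.
pose hk k := fun i : 'I_p => if (val i < k)%N then g i else f i.
suff H : forall k, cong a0 (th f) (th (hk k)).
  apply: cong_trans (H p) _; apply: cong_eq; apply: th_ext => i.
  by rewrite /hk ltn_ord.
elim=> [|k IH].
  by apply: cong_eq; apply: th_ext => i; rewrite /hk ltn0.
case: (ltnP k p) => kp; last first.
  apply: cong_trans IH _; apply: cong_eq; apply: th_ext => i; rewrite /hk.
  by rewrite ltnS; case: ltngtP => //= e; have := ltn_ord i; rewrite e ltnNge kp.
pose i := Ordinal kp.
apply: cong_trans IH _.
rewrite (th_ext (f := hk k) (g := upd (hk k) i (f i))); last first.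
  by move=> j; rewrite /upd /hk; case: eqP => // ->; rewrite ltnn.
rewrite (th_ext (f := hk k.+1) (g := upd (hk k) i (g i))); last first.
  move=> j; rewrite /upd /hk ltnS; case: eqP => [->|/eqP ne]; first by rewrite leqnn.
  rewrite leq_eqVlt; case: eqP => //= e; case/negP: ne; apply/eqP/val_inj => //.
by apply: th_cong1.
Qed.

Lemma restr_pder : is_pder_up_to iota (cong a0) th.
Proof.
split.
- exact: th_cong.
- by move=> *; apply: cong_eq; apply: thD.
- by move=> *; apply: cong_eq; apply: thZ.
- by move=> *; apply: cong_eq; apply: thM.
move=> f i j ij fij.
apply: cong_trans (th_cong (g := upd f j (f i)) _) _.
  by move=> k; rewrite /upd; case: eqP => [->|_]; [apply: cong_sym|apply: cong_refl].
apply: cong_eq; apply: (th_alt ij); rewrite upd_eq upd_neq //.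
Qed.
End Pder.

Section Lin.
Variables (K : fieldType) (l : nat).
Implicit Types (a b : 'cV[K]_l).

Lemma lform_lin c d a b : lform (c *: a + d *: b) = c *: lform a + d *: lform b.
Proof.
rewrite /lform !scaler_sumr -big_split /=; apply: eq_bigr => i _.
by rewrite !mxE scalerDl !scalerA.
Qed.

Lemma lform_coef a i : (lform a)@_(U_(i)%MM) = a i 0.
Proof.
rewrite /lform raddf_sum /= (bigD1 i) //= big1 ?addr0.
  by rewrite mcoeffZ mcoeffXU eqxx mulr1.
by move=> j ji; rewrite mcoeffZ mcoeffXU (negbTE ji) mulr0.
Qed.

Lemma lform_eq0 a : lform a = 0 -> a = 0.
Proof.
move=> e; apply/matrixP => i j; rewrite (ord1 j) -lform_coef e mcoeff0 mxE //.
Qed.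

Lemma ker_prop a b d : b != 0 -> b = d *: a -> (kermx b == kermx a)%MS.
Proof.
move=> nb e; have nd : d != 0 by apply: contraNneq nb => d0; rewrite e d0 scale0r.
apply/andP; split; apply/sub_kermxP.
  have -> : a = d^-1 *: b by rewrite e scalerA mulVf // scale1r.
  by rewrite -scalemxAr mulmx_ker scaler0.
by rewrite e -scalemxAr mulmx_ker scaler0.
Qed.

Lemma span2 a0 aH b : (kermx a0 :&: kermx aH <= kermx b)%MS ->
  exists c d : K, b = c *: aH + d *: a0.
Proof.
move=> sub.
pose M := row_mx a0 aH.
have kM : (kermx M <= kermx b)%MS.
  apply: submx_trans sub; rewrite sub_capmx.
  have := mulmx_ker M; rewrite mul_mx_row => e.
  have [e1 e2] : kermx M *m a0 = 0 /\ kermx M *m aH = 0.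
    by apply: eq_row_mx; rewrite e row_mx0.
  by rewrite !sub_kermx e1 e2 eqxx.
pose N := row_mx M b.
have kMN : (kermx M <= kermx N)%MS.
  by rewrite sub_kermx mul_mx_row mulmx_ker (sub_kermxP kM) row_mx0.
have kNM : (kermx N <= kermx M)%MS.
  have := mulmx_ker N; rewrite mul_mx_row => e.
  have [e1 e2] : kermx N *m M = 0 /\ kermx N *m b = 0.
    by apply: eq_row_mx; rewrite e row_mx0.
  by rewrite sub_kermx e1.
have rk : \rank M = \rank N.
  have r1 := mxrankS kMN; have r2 := mxrankS kNM.
  rewrite !mxrank_ker in r1 r2.
  have := rank_leq_row M; have := rank_leq_row N; lia.
have sMN : (M^T <= N^T)%MS.
  by rewrite (tr_row_mx M b); apply: submx_trans (addsmxSl M^T b^T) _; rewrite addsmxE.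
have sNM : (N^T <= M^T)%MS.
  by rewrite -(mxrank_leqif_sup sMN).2 !mxrank_tr rk.
have : (b^T <= M^T)%MS.
  by apply: submx_trans sNM; rewrite (tr_row_mx M b); apply: submx_trans (addsmxSr M^T b^T) _; rewrite addsmxE.
case/submxP => D eD.
have eb : b = M *m D^T by rewrite -[b]trmxK eD trmx_mul trmxK.
rewrite -[D^T]vsubmxK /M mul_row_col in eb.
rewrite [usubmx _]mx11_scalar [dsubmx _]mx11_scalar !mul_mx_scalar in eb.
by exists ((dsubmx D^T) 0 0), ((usubmx D^T) 0 0); rewrite eb addrC.
Qed.
End Lin.

Section Phi.
Variables (K : fieldType) (l : nat).
Implicit Types (a b : 'cV[K]_l).

Lemma phi_exists a : a != 0 -> exists lq : l.-tuple {mpoly K[l]},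
 [/\ forall G, cong (lform a) G (G \mPo lq), lform a \mPo lq = 0 &
     forall b, b != 0 -> ~~ (kermx b == kermx a)%MS -> lform b \mPo lq != 0].
Proof.
move=> na.
have [j nz] : exists j, a j 0 != 0.
  case: (pickP (fun j => a j 0 != 0)) => [j nz|none]; first by exists j.
  case/eqP: na; apply/matrixP => i k; rewrite (ord1 k) mxE.
  by have := none i => /= /negbFE/eqP.
pose L := lform a.
pose t (i : 'I_l) := 'X_i - ((i == j)%:R * (a j 0)^-1) *: L.
pose lq := [tuple t i | i < l].
have hX : forall i, 'X_i \mPo lq = t i.
  by move=> i; rewrite comp_mpolyXU -(tnth_nth 0) tnth_mktuple.
have hl : forall b, lform b \mPo lq = lform b - (b j 0 / a j 0) *: L.
  move=> b; rewrite /lform raddf_sum /=.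
  under eq_bigr => i _ do rewrite comp_mpolyZ hX /t scalerBr scalerA.
  rewrite sumrB -scaler_suml; congr (_ - _ *: _).
  rewrite (bigD1 j) //= big1 ?addr0; first by rewrite eqxx mul1r.
  by move=> i ij; rewrite (negbTE ij) mul0r mulr0.
exists lq; split.
- elim/mpolyind => [|c m p _ _ IH].
    by rewrite comp_mpoly0; apply: cong_refl.
  rewrite comp_mpolyD comp_mpolyZ; apply: cong_add => //.
  rewrite -!mul_mpolyC; apply: cong_mul; first exact: cong_refl.
  rewrite comp_mpolyX [X in cong _ X _]mpolyXE_id.
  apply: (big_ind2 (cong L)); first exact: cong_refl.
    by move=> *; apply: cong_mul.
  move=> i _; apply: cong_exp; rewrite tnth_mktuple /t.
  exists (((i == j)%:R * (a j 0)^-1)%:MP).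
  by rewrite opprB addrCA subrr addr0 [RHS]mulrC mul_mpolyC.
- by rewrite hl divff // scale1r subrr.
move=> b nb nk; rewrite hl.
apply: contra nk => /eqP e.
apply: (@ker_prop _ _ a b (b j 0 / a j 0)) => //.
have : lform (1 *: b + (- (b j 0 / a j 0)) *: a) = 0.
  by rewrite lform_lin scale1r scaleNr.
move/lform_eq0; rewrite scale1r scaleNr => /eqP.
by rewrite subr_eq0 => /eqP.
Qed.
End Phi.

Section Prod.
Variables (K : fieldType) (l : nat).

Lemma prime_pow (a : 'cV[K]_l) (lq : l.-tuple {mpoly K[l]}) (M : {mpoly K[l]}) :
  a != 0 -> (forall G, cong (lform a) G (G \mPo lq)) -> lform a \mPo lq = 0 ->
  M \mPo lq != 0 ->
  forall k g Q, M * Q = lform a ^+ k * g -> exists Q', Q = lform a ^+ k * Q'.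
Proof.
move=> na c1 c2 nM.
have nL : lform a != 0 by apply: contra na => /eqP /lform_eq0 ->.
elim=> [|k IH] g Q e; first by exists Q; rewrite expr0 mul1r.
have : (M * Q) \mPo lq = 0 by rewrite e exprS -mulrA rmorphM /= c2 mul0r.
rewrite rmorphM /= => /eqP; rewrite mulf_eq0 (negbTE nM) /= => /eqP cQ.
have [h eh] := c1 Q; rewrite cQ subr0 in eh.
have : M * h = lform a ^+ k * g.
  apply: (mulfI nL); rewrite mulrA [lform a * M]mulrC -mulrA -eh e exprS mulrA //.
case/IH => Q' eQ; exists Q'; by rewrite eh eQ exprS mulrA.
Qed.

Lemma prod_dvd (I : finType) (a : I -> 'cV[K]_l) (m : I -> nat) (F : {mpoly K[l]}) :
  (forall H, a H != 0) ->
  (forall H H', H != H' -> ~~ (kermx (a H) == kermx (a H'))%MS) ->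
  forall s : seq I, uniq s ->
  (forall H, H \in s -> exists g, F = lform (a H) ^+ m H * g) ->
  exists g, F = (\prod_(H <- s) lform (a H) ^+ m H) * g.
Proof.
move=> na nk; elim=> [|x s IH] /=.
  by move=> _ _; exists F; rewrite big_nil mul1r.
case/andP => xs us hs.
have [Q eQ] : exists Q, F = (\prod_(H <- s) lform (a H) ^+ m H) * Q.
  by apply: IH => // H Hs; apply: hs; rewrite inE Hs orbT.
have [g eg] := hs x (mem_head _ _).
have [lq [c1 c2 c3]] := phi_exists (na x).
have nP : (\prod_(H <- s) lform (a H) ^+ m H) \mPo lq != 0.
  rewrite rmorph_prod prodf_seq_neq0; apply/allP => y ys /=.
  rewrite rmorphXn expf_neq0 //; apply: c3 => //; apply: nk.
  by apply: contraNneq xs => <-.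
have e : (\prod_(H <- s) lform (a H) ^+ m H) * Q = lform (a x) ^+ m x * g.
  by rewrite -eQ -eg.
have [Q' eQ'] := prime_pow (na x) c1 c2 nP e.
exists Q'; rewrite big_cons eQ eQ' mulrCA mulrA //.
Qed.
End Prod.

Theorem lemma3p2 (K : fieldType) (l : nat) (I : finType)
    (a : I -> 'cV[K]_l) (m : I -> nat) (H0 : I)
    (p : nat) (hp : (0 < p)%N)
    (delta : ('I_p -> {mpoly K[l]}) -> {mpoly K[l]}) :
  is_multiarr a m -> Dp0 a m H0 delta -> restr_in_Dp a m H0 delta.
Proof.
case=> na nk _ [[hth hdiv] hz].
set L0 := lform (a H0).
have h0 : forall (i : 'I_p) f, val i = 0%N -> f i = L0 -> delta f = 0 by [].
split; first exact: (restr_pder hth h0 hp).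
move=> H /= nH i f vi fc.
set LH := lform (a H).
pose F := delta (upd f i LH).
have cF : cong L0 (delta f) F.
  apply: (th_cong hth h0 hp) => j; rewrite /upd; case: eqP => [->|_] //.
  exact: cong_refl.
pose sel H' := (H' != H0) && ((kermx (a H0) :&: kermx (a H) <= kermx (a H'))%MS).
have key : forall H', sel H' -> exists c d : K,
    [/\ c != 0, a H' = c *: a H + d *: a H0 & a H = c^-1 *: a H' + (- (d / c)) *: a H0].
  move=> H' /andP[nH' sH']; have [c [d e]] := span2 sH'; exists c, d.
  have nc : c != 0.
    apply/negP => /eqP c0; have := nk H' H0 nH'; rewrite (@ker_prop _ _ (a H0) (a H') d) //.
    by rewrite e c0 scale0r add0r.
  split => //; rewrite e scalerDr !scalerA mulVf // scale1r addrAC.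
  by rewrite scaleNr [c^-1 * d]mulrC subrK.
have dv : forall H', H' \in [seq H' <- index_enum I | sel H'] ->
    exists g, F = lform (a H') ^+ m H' * g.
  move=> H'; rewrite mem_filter => /andP[sH' _].
  have [c [d [nc e1 e2]]] := key H' sH'.
  have [g eg] := hdiv H' isT i (upd f i (lform (a H'))) vi (upd_eq _ _ _).
  exists ((c^-1)%:MP * g); rewrite /F /LH e2 lform_lin -!mul_mpolyC.
  rewrite (thD hth) !(thZ hth).
  rewrite [delta (upd f i (lform (a H0)))](@th_a0 _ _ _ _ _ hth _ h0 hp _ i) ?upd_eq // mulr0 addr0 /cst eg.
  by rewrite mulrCA.
have [Q eQ] := prod_dvd na nk (filter_uniq _ (index_enum_uniq I)) dv.
have cP : forall r, exists k : K, cong L0 (\prod_(H' <- r | sel H') lform (a H') ^+ m H')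
    (k *: LH ^+ (\sum_(H' <- r | sel H') m H')).
  elim=> [|x r [k IH]].
    by exists 1; rewrite !big_nil expr0 scale1r; apply: cong_refl.
  rewrite !big_cons; case sx: (sel x); last by exists k.
  have [c [d [nc e1 _]]] := key x sx.
  exists (c ^+ m x * k); rewrite exprD -scalerA scalerAr scalerAl.
  apply: cong_mul => //; rewrite -exprZn; apply: cong_exp.
  rewrite e1 lform_lin; exists (d%:MP).
  by rewrite addrC addKr [RHS]mulrC mul_mpolyC.
have [k ck] := cP (index_enum I).
exists (k *: Q).
apply: cong_trans cF _; rewrite eQ big_filter.
apply: cong_trans (cong_mul ck (cong_refl _ Q)) _.
apply: cong_eq; rewrite /zmult -/sel.
by rewrite -scalerAl scalerAr.
Qed.
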